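(* Let $d\ge2$, $n\ge1$, $\gamma$ a positive conductivity on the lattice graph below, and $d\le t\le dn-1$. Then $\ker T_1^{(t-1)}\subseteq\ker T_1^{(t)}$, where $\mathbb R^{J_{t-1}^{\mathcal S}}$ is regarded as a subspace of $\mathbb R^{J_t^{\mathcal S}}$ via extension by zero.
   Context: Lattice: $D=\{x\in\mathbb Z^d:1\le x_i\le n\ \forall i\}$, $\partial D=\{p\in\mathbb Z^d:\min_{q\in D}\|q-p\|_{\ell^1}=1\}$; $E$ = unordered pairs $pq\subseteq D\cup\partial D$ with $\|p-q\|_{\ell^1}=1$, not both in $\partial D$; $\mathcal N(p)=\{q:pq\in E\}$. Conductivity $\gamma:E\to(0,\infty)$, symmetric. $S_\gamma\varphi$ is the unique $\mathbf u\in\mathbb R^{D\cup\partial D}$ with $\sum_{q\in\mathcal N(p)}\gamma_{pq}(\mathbf u_q-\mathbf u_p)=0$ for all $p\in D$ and $\mathbf u=\varphi$ on $\partial D$. Functions on subsets are extended by zero. With $s(x)=\sum_ix_i$: $L_t=\{x\in D:s(x)=t\}$, $K_t^+=\{x\in\partial D:s(x)=t,\max_ix_i=n+1\}$, $K_t^-=\{x\in\partial D:s(x)=t,\min_ix_i=0\}$, $K_t^{\mathcal S\pm}=\bigcup_{\ell\le t}K_\ell^\pm$, $J_t^{\mathcal S}=K_t^{\mathcal S-}\cup K_{t+1}^{\mathcal S+}$. $T_1^{(t)}:\mathbb R^{J_t^{\mathcal S}}\to\mathbb R^{L_{t+1}}$, $\varphi\mapsto(S_\gamma\varphi)|_{L_{t+1}}$.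 *)

(* Defs.v *)
From HB Require Import structures.
From mathcomp Require Import all_boot all_order all_algebra.
From mathcomp Require Import reals.
Set Implicit Arguments. Unset Strict Implicit. Unset Printing Implicit Defensive.
Import Order.TTheory GRing.Theory Num.Theory.
Local Open Scope ring_scope.

Definition pt (d : nat) := 'I_d -> int.

Definition l1 d (p q : pt d) : int := \sum_(i < d) `|p i - q i|.

Definition ssum d (x : pt d) : int := \sum_(i < d) x i.

Definition inD d (n : nat) (x : pt d) : bool :=
  [forall i, (1 <= x i) && (x i <= n%:Z)].

(* the points of D, enumerated by {ffun 'I_d -> 'I_n} via f |-> f + 1 *)
Definition ptD d n (f : {ffun 'I_d -> 'I_n}) : pt d := fun i => (f i)%:Z + 1.

(* boundary: min_{q in D} ||q - p||_1 = 1 *)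
Definition inBd d (n : nat) (p : pt d) : bool :=
  [forall f : {ffun 'I_d -> 'I_n}, 1 <= l1 (ptD f) p] &&
  [exists f : {ffun 'I_d -> 'I_n}, l1 (ptD f) p == 1].

Definition inDbar d n (p : pt d) : bool := inD n p || inBd n p.

Definition isE d n (p q : pt d) : bool :=
  [&& l1 p q == 1, inDbar n p, inDbar n q & ~~ (inBd n p && inBd n q)].

(* p +/- e_i ; every q with ||p-q||_1 = 1 occurs in nbrs p *)
Definition shift d (p : pt d) (i : 'I_d) (s : int) : pt d :=
  fun j => if j == i then p j + s else p j.
Definition nbrs d (p : pt d) : seq (pt d) :=
  [seq shift p i s | i <- enum 'I_d, s <- [:: 1; -1]].

Definition kirchhoff (R : realType) d n (gamma : pt d -> pt d -> R)
  (u : pt d -> R) (p : pt d) : R :=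
  \sum_(q <- nbrs p | isE n p q) gamma p q * (u q - u p).

(* u = S_gamma phi: u solves the Dirichlet problem with boundary data phi *)
Definition is_Ssol (R : realType) d n (gamma : pt d -> pt d -> R)
  (phi u : pt d -> R) : Prop :=
  (forall p, inD n p -> kirchhoff n gamma u p = 0) /\
  (forall p, inBd n p -> u p = phi p).

Definition inL d n (t : int) (x : pt d) : bool := inD n x && (ssum x == t).

Definition maxis d n (x : pt d) : bool :=
  [exists i, x i == n%:Z + 1] && [forall i, x i <= n%:Z + 1].
Definition minis0 d (x : pt d) : bool :=
  [exists i, x i == 0] && [forall i, 0 <= x i].

(* K_t^{S+} = U_{l <= t} K_l^+, K_t^{S-} = U_{l <= t} K_l^- *)
Definition inKSp d n (t : int) (x : pt d) : bool :=
  [&& inBd n x, ssum x <= t & maxis n x].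
Definition inKSm d n (t : int) (x : pt d) : bool :=
  [&& inBd n x, ssum x <= t & minis0 x].

Definition inJ d n (t : int) (x : pt d) : bool :=
  inKSm n t x || inKSp n (t + 1) x.

(* Main.v *)
Require Import Defs.
From HB Require Import structures.
From mathcomp Require Import all_boot all_order all_algebra.
From mathcomp Require Import reals zify.
From Stdlib Require Import FunctionalExtensionality.
Import Order.TTheory GRing.Theory Num.Theory.
Set Implicit Arguments. Unset Strict Implicit.
Local Open Scope ring_scope.
Lemma ssum_shift d (p : pt d) i s : ssum (shift p i s) = ssum p + s.
Proof.
rewrite /ssum (bigD1 i) //= [in RHS](bigD1 i) //= /shift eqxx addrAC.
congr (_ + _ + _); apply: eq_bigr => j /negbTE ->; done.
Qed.

Lemma l1_shift d (p : pt d) i s : l1 p (shift p i s) = `|s|.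
Proof.
rewrite /l1 (bigD1 i) //= big1 ?addr0 /shift ?eqxx.
  by rewrite opprD addrA subrr add0r normrN.
by move=> j /negbTE ->; rewrite subrr normr0.
Qed.

Lemma l1_refl d (p : pt d) : l1 p p = 0.
Proof. by rewrite /l1 big1 // => j _; rewrite subrr normr0. Qed.

Lemma l1_ge0 d (p q : pt d) : 0 <= l1 p q.
Proof. by apply: sumr_ge0 => j _. Qed.

Lemma inD_ptD d n (f : {ffun 'I_d -> 'I_n}) : inD n (ptD f).
Proof.
apply/forallP => j; rewrite /ptD; apply/andP; split; first lia.
have := ltn_ord (f j); lia.
Qed.

Lemma inD_ex d n (q : pt d) : inD n.+1 q -> exists f : {ffun 'I_d -> 'I_n.+1}, ptD f = q.
Proof.
move=> /forallP Hq.
exists [ffun j => inord `|q j - 1|%N].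
apply: functional_extensionality => j; rewrite /ptD ffunE.
have /andP [h1 h2] := Hq j.
rewrite inordK; last lia.
lia.
Qed.

Lemma inD_notBd d n (p : pt d) : inD n.+1 p -> ~~ inBd n.+1 p.
Proof.
move=> /inD_ex [f <-]; apply/negP => /andP [/forallP /(_ f)].
by rewrite l1_refl.
Qed.
Lemma shift_Bd d n (p : pt d) i s : inD n.+1 p -> `|s| = 1 -> ~~ inD n.+1 (shift p i s) ->
  inBd n.+1 (shift p i s).
Proof.
move=> Dp hs nD; apply/andP; split.
  apply/forallP => f.
  have h0 := l1_ge0 (ptD f) (shift p i s).
  have : l1 (ptD f) (shift p i s) != 0.
    apply: contra nD; rewrite /l1 psumr_eq0 // => /allP H.
    apply/forallP => j; have := H j (mem_index_enum j).
    rewrite /= normr_eq0 subr_eq0 => /eqP <-.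
    by have := inD_ptD f; move/forallP/(_ j).
  lia.
have [f hf] := inD_ex Dp.
by apply/existsP; exists f; rewrite hf l1_shift hs.
Qed.

Lemma kirchhoffE (R : realType) d n (gamma : pt d -> pt d -> R) (v : pt d -> R) p :
  kirchhoff n gamma v p = \sum_(i < d)
    ((if isE n p (shift p i 1) then gamma p (shift p i 1) * (v (shift p i 1) - v p) else 0)
   + (if isE n p (shift p i (-1)) then gamma p (shift p i (-1)) * (v (shift p i (-1)) - v p) else 0)).
Proof.
rewrite /kirchhoff big_mkcond /nbrs big_allpairs_dep /= big_enum /=.
by apply: eq_bigr => i _; rewrite !big_cons big_nil addr0.
Qed.

Lemma kirchhoffN (R : realType) d n (gamma : pt d -> pt d -> R) (v : pt d -> R) p :
  kirchhoff n gamma (fun x => - v x) p = - kirchhoff n gamma v p.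
Proof.
rewrite /kirchhoff -sumrN; apply: eq_bigr => q _; rewrite -mulrN; congr (_ * _).
by rewrite opprB opprK addrC.
Qed.
Lemma core (R : realType) d n (hd : (0 < d)%N) (gamma : pt d -> pt d -> R)
  (gamma_pos : forall p q, isE n.+1 p q -> 0 < gamma p q) (t : int) (v : pt d -> R)
  (hk : forall p, inD n.+1 p -> kirchhoff n.+1 gamma v p = 0)
  (hb : forall q, inBd n.+1 q -> ~~ inJ n.+1 (t - 1) q -> v q = 0)
  (hL : forall x, inL n.+1 t x -> v x = 0) :
  forall f : {ffun 'I_d -> 'I_n.+1}, t + 1 <= ssum (ptD f) -> v (ptD f) <= 0.
Proof.
move=> f0 Sf0; rewrite leNgt; apply/negP => vpos.
pose S := [pred f : {ffun 'I_d -> 'I_n.+1} | t + 1 <= ssum (ptD f)].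
have [f1 Sf1 Hf1] := @arg_maxP _ R _ f0 S (fun f => v (ptD f)) Sf0.
set M := v (ptD f1).
have Mpos : 0 < M := lt_le_trans vpos (Hf1 f0 Sf0).
pose S' := [pred f : {ffun 'I_d -> 'I_n.+1} | (t + 1 <= ssum (ptD f)) && (v (ptD f) == M)].
have S'f1 : S' f1 by rewrite /S' /= eqxx andbT.
have [f2 /andP[Sf2 /eqP vf2] Hf2] := @arg_maxP _ int _ f1 S' (fun f => ssum (ptD f)) S'f1.
set p := ptD f2.
have Dp : inD n.+1 p := inD_ptD f2.
have key : forall i s, (s == 1) || (s == -1) -> inDbar n.+1 (shift p i s) ->
    v (shift p i s) <= M /\ (s == 1 -> v (shift p i s) < M).
  move=> i s hs Dq; set q := shift p i s.
  have hs' : s = 1 \/ s = -1 by case/orP: hs => /eqP; auto.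
  have sq : ssum q = ssum p + s := ssum_shift p i s.
  case: (boolP (inD n.+1 q)) => Dq'.
    have [g hg] := inD_ex Dq'.
    case: (leP (t + 1) (ssum q)) => hq.
      have Sg : S g by rewrite /S /= hg.
      have le : v q <= M by rewrite -hg; exact: Hf1 g Sg.
      split => // /eqP s1; rewrite lt_neqAle le andbT; apply/negP => /eqP e.
      have S'g : S' g by rewrite /S' /= hg e eqxx hq.
      have := Hf2 g S'g; rewrite hg sq s1 /=; rewrite -/p; lia.
    have Lq : inL n.+1 t q.
      rewrite /inL Dq' /=; apply/eqP; move: Sf2; rewrite /= -/p; lia.
    by rewrite (hL _ Lq); split => //; exact: ltW.
  have Bq : inBd n.+1 q by move: Dq; rewrite /inDbar (negbTE Dq').
  have nJ : ~~ inJ n.+1 (t - 1) q.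
    rewrite /inJ /inKSm /inKSp negb_or; apply/andP; split.
      apply/negP => /and3P [_ h _]; move: Sf2; rewrite /= -/p; lia.
    apply/negP => /and3P [_ h /andP [/existsP [j /eqP hj] _]].
    have s1 : s = -1 by move: Sf2; rewrite /= -/p; lia.
    move: Dp => /forallP /(_ j) /andP [_ hpj].
    move: hj; rewrite /q /shift; case: (j == i) => /=; lia.
  by rewrite (hb _ Bq nJ); split => //; exact: ltW.
have hT : forall i s, (s == 1) || (s == -1) ->
    (if isE n.+1 p (shift p i s) then gamma p (shift p i s) * (v (shift p i s) - v p) else 0) <= 0.
  move=> i s hs; case: ifP => // E.
  have Dq : inDbar n.+1 (shift p i s) by case/and4P: E.
  have [le _] := key i s hs Dq.
  apply: mulr_ge0_le0; first exact/ltW/gamma_pos.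
  by rewrite subr_le0 /p vf2.
pose i0 : 'I_d := Ordinal hd.
have E0 : isE n.+1 p (shift p i0 1).
  apply/and4P; split.
  - by rewrite l1_shift.
  - by rewrite /inDbar Dp.
  - rewrite /inDbar; case: (boolP (inD n.+1 (shift p i0 1))) => //= nD.
    by apply: shift_Bd.
  - by rewrite (negbTE (inD_notBd Dp)).
have A : (if isE n.+1 p (shift p i0 1) then gamma p (shift p i0 1) * (v (shift p i0 1) - v p) else 0) < 0.
  rewrite E0 (pmulr_rlt0 _ (gamma_pos _ _ E0)).
  have [_ lt] := key i0 1 isT (let: (And4 _ _ h _) := and4P E0 in h).
  by rewrite subr_lt0 /p vf2 lt.
have := hk p Dp; rewrite kirchhoffE (bigD1 i0) //= => H.
have B : \sum_(i < d | i != i0)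
   ((if isE n.+1 p (shift p i 1) then gamma p (shift p i 1) * (v (shift p i 1) - v p) else 0)
   + (if isE n.+1 p (shift p i (-1)) then gamma p (shift p i (-1)) * (v (shift p i (-1)) - v p) else 0)) <= 0.
  apply: sumr_le0 => i _; apply: (le_trans (lerD (hT i 1 isT) (hT i (-1) isT))); by rewrite addr0.
have B0 := hT i0 (-1) isT.
have := ltr_leD (ltr_leD A B0) B.
by rewrite H !addr0 ltxx.
Qed.

Theorem proposition2p3 (R : realType) (d n : nat) (hd : (2 <= d)%N) (hn : (1 <= n)%N)
  (gamma : pt d -> pt d -> R)
  (gamma_sym : forall p q, gamma p q = gamma q p)
  (gamma_pos : forall p q, isE n p q -> 0 < gamma p q)
  (t : nat) (ht1 : (d <= t)%N) (ht2 : (t <= d * n - 1)%N)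
  (phi u : pt d -> R)
  (phi_supp : forall x, ~~ inJ n (t%:Z - 1) x -> phi x = 0)
  (hu : is_Ssol n gamma phi u)
  (hker : forall x, inL n (t%:Z) x -> u x = 0) :
  forall x, inL n (t%:Z + 1) x -> u x = 0.
Proof.
case: n hn gamma_pos ht2 phi_supp hu hker => [//|n] _ gamma_pos _ phi_supp [hk hb] hker.
have hd0 : (0 < d)%N by apply: leq_trans hd.
move=> x /andP [Dx /eqP sx].
have [f hf] := inD_ex Dx.
have Sf : t%:Z + 1 <= ssum (ptD f) by rewrite hf sx.
apply/le_anti/andP; split.
  rewrite -hf; apply: (core hd0 gamma_pos (t := t%:Z)) => //.
  by move=> q Bq nJ; rewrite hb // phi_supp.
rewrite -oppr_le0 -hf.
apply: (core hd0 gamma_pos (t := t%:Z) (v := fun x => - u x)) => //.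
- by move=> p Dp; rewrite kirchhoffN hk ?oppr0.
- by move=> q Bq nJ; rewrite hb // phi_supp ?oppr0.
- by move=> y Ly; rewrite hker ?oppr0.
Qed.
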